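(* Let $(\mathcal{K},[\cdot,\cdot])$ be a Krein space with fundamental symmetry $J$, let $\{k_n\}_{n\in\mathbb{N}}$ be a frame for the Krein space $\mathcal{K}$, and let $S$ be its frame operator. Then: (i) $\{S^{-1}k_n\}_{n}$ is a dual frame of $\{k_n\}_n$ for the Krein space $\mathcal{K}$; (ii) $\{JS^{-1}k_n\}_n$ is a dual frame of $\{Jk_n\}_n$ for the Krein space $\mathcal{K}$; (iii) $\{JS^{-1}k_n\}_n$ is a dual frame of $\{k_n\}_n$ for the Hilbert space $(\mathcal{K},[\cdot,\cdot]_J)$; (iv) $\{S^{-1}k_n\}_n$ is a dual frame of $\{Jk_n\}_n$ for the Hilbert space $(\mathcal{K},[\cdot,\cdot]_J)$. Moreover, if $0<A\leq B<\infty$ are frame bounds for $\{k_n\}_n$ (as a frame for the Krein space $\mathcal{K}$), then all these dual frames admit the frame bounds $0<B^{-1}\leq A^{-1}<\infty$.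
   Context: A Krein space $(\mathcal{K},[\cdot,\cdot])$ has a fundamental decomposition $\mathcal{K}=\mathcal{K}_+\oplus\mathcal{K}_-$ and fundamental symmetry $J(k^++k^-)=k^+-k^-$, such that $[h,k]_J:=[h,Jk]$ makes $\mathcal{K}$ a Hilbert space; $\|k\|_J:=\sqrt{[k,k]_J}$. A countable sequence $\{k_n\}$ is a frame for the Krein space $\mathcal{K}$ with frame bounds $A\le B$ if $A\|k\|_J^2\leq\sum_n|[k_n,k]|^2\leq B\|k\|_J^2$ for all $k$; a frame for the Hilbert space $(\mathcal{K},[\cdot,\cdot]_J)$ is defined likewise with $[k_n,k]_J$ in place of $[k_n,k]$. The frame operator of a frame $\{k_n\}$ for the Krein space $\mathcal{K}$ is $S=T\tilde JT^*$ where $T:\mathfrak{k}_2(\mathbb{N})\to\mathcal{K}$, $T(\alpha_n)=\sum\alpha_nk_n$, $\mathfrak{k}_2(\mathbb{N})$ is $\ell_2(\mathbb{N})$ with a Krein inner product whose fundamental symmetry $\tilde J$ makes $[\cdot,\cdot]_{\tilde J}$ the standard $\ell_2$ inner product, and $T^*$ is the Krein adjoint; equivalently $Sk=\sum_n[k_n,k]k_n$. $S$ is invertible with bounded inverse. A dual frame of a frame $\{k_n\}$ for the Krein space $\mathcal{K}$ is a frame $\{h_n\}$ for the Krein space $\mathcal{K}$ with $k=\sum_n[h_n,k]k_n$ for all $k\in\mathcal{K}$. A dual frame of a frame $\{f_n\}$ for the Hilbert space $(\mathcal{K},[\cdot,\cdot]_J)$ is a frame $\{g_n\}$ for that Hilbert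 space with $k=\sum_n[g_n,k]_Jf_n=\sum_n[f_n,k]_Jg_n$ for all $k$. *)

(* Defs.v *)
From mathcomp Require Import all_boot all_algebra.
From mathcomp Require Import reals complex.
Set Implicit Arguments.
Unset Strict Implicit.
Unset Printing Implicit Defensive.
Import GRing.Theory Num.Theory.
Local Open Scope ring_scope.
Local Open Scope complex_scope.

(* The Krein space is a complex vector space V : lmodType R[i] with an
   (indefinite) inner product ip : V -> V -> R[i], linear in the SECOND
   argument and Hermitian (hence conjugate-linear in the first), so that
   S k = sum_n [k_n, k] k_n is linear in k. *)

Section KreinDefs.
Variable R : realType.
Variable V : lmodType R[i].

Definition hnorm (h : V -> V -> R[i]) (v : V) : R[i] := sqrtC (h v v).

Definition series_sumC (u : nat -> R[i]) (s : R[i]) : Prop :=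
  forall eps : R, 0 < eps -> exists N : nat, forall n : nat, (N <= n)%N ->
    `| \sum_(i < n) u i - s | < eps%:C.

Definition series_sumV (h : V -> V -> R[i]) (u : nat -> V) (y : V) : Prop :=
  forall eps : R, 0 < eps -> exists N : nat, forall n : nat, (N <= n)%N ->
    hnorm h (\sum_(i < n) u i - y) < eps%:C.

Definition hilbert_ip (h : V -> V -> R[i]) : Prop :=
  [/\ (forall (x : V) (a : R[i]) (y z : V), h x (a *: y + z) = a * h x y + h x z),
      (forall x y : V, h x y = (h y x)^*),
      (forall x : V, 0 <= h x x),
      (forall x : V, h x x = 0 -> x = 0) &
      (forall u : nat -> V,
         (forall eps : R, 0 < eps -> exists N : nat, forall m n : nat,
             (N <= m)%N -> (N <= n)%N -> hnorm h (u m - u n) < eps%:C) ->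
         exists l : V, forall eps : R, 0 < eps -> exists N : nat,
             forall n : nat, (N <= n)%N -> hnorm h (u n - l) < eps%:C)].

Definition subspace (P : V -> Prop) : Prop :=
  P 0 /\ forall (a : R[i]) (x y : V), P x -> P y -> P (a *: x + y).

Definition ipJ (ip : V -> V -> R[i]) (J : V -> V) : V -> V -> R[i] :=
  fun h k => ip h (J k).

Definition normJ (ip : V -> V -> R[i]) (J : V -> V) (v : V) : R[i] :=
  hnorm (ipJ ip J) v.

Definition krein_space (ip : V -> V -> R[i]) (J : V -> V) : Prop :=
  [/\ (forall (x : V) (a : R[i]) (y z : V), ip x (a *: y + z) = a * ip x y + ip x z),
      (forall x y : V, ip x y = (ip y x)^*),
      (exists Kp Km : V -> Prop,
         [/\ subspace Kp /\ subspace Km,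
             (forall x, Kp x -> Km x -> x = 0) /\
             (forall k : V, exists kp km, Kp kp /\ Km km /\ k = kp + km),
             (forall x y, Kp x -> Km y -> ip x y = 0),
             (forall x, Kp x -> 0 <= ip x x) /\ (forall x, Km x -> ip x x <= 0) &
             (forall kp km, Kp kp -> Km km -> J (kp + km) = kp - km)]) &
      hilbert_ip (ipJ ip J)].

(* A <= B are frame bounds of the sequence k w.r.t. the form f
   (f = ip: frame for the Krein space; f = ipJ ip J: frame for the
   Hilbert space (V,[.,.]_J)); the norm is always ||.||_J. *)
Definition frame_bounds (ip : V -> V -> R[i]) (J : V -> V)
    (f : V -> V -> R[i]) (k : nat -> V) (A B : R) : Prop :=
  forall x : V, exists s : R[i],
    series_sumC (fun n => `| f (k n) x | ^+ 2) s /\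
    A%:C * normJ ip J x ^+ 2 <= s /\ s <= B%:C * normJ ip J x ^+ 2.

Definition is_frame (ip : V -> V -> R[i]) (J : V -> V)
    (f : V -> V -> R[i]) (k : nat -> V) : Prop :=
  exists A B : R, 0 < A /\ A <= B /\ frame_bounds ip J f k A B.

Definition frame_operator (ip : V -> V -> R[i]) (J : V -> V)
    (k : nat -> V) (S : V -> V) : Prop :=
  forall x : V, series_sumV (ipJ ip J) (fun n => ip (k n) x *: k n) (S x).

Definition krein_dual (ip : V -> V -> R[i]) (J : V -> V) (h k : nat -> V) : Prop :=
  [/\ is_frame ip J ip k, is_frame ip J ip h &
      forall x : V, series_sumV (ipJ ip J) (fun n => ip (h n) x *: k n) x].

Definition hilbert_dual (ip : V -> V -> R[i]) (J : V -> V) (g f : nat -> V) : Prop :=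
  [/\ is_frame ip J (ipJ ip J) f, is_frame ip J (ipJ ip J) g,
      (forall x : V, series_sumV (ipJ ip J) (fun n => ipJ ip J (g n) x *: f n) x) &
      (forall x : V, series_sumV (ipJ ip J) (fun n => ipJ ip J (f n) x *: g n) x)].

End KreinDefs.

(* Main.v *)
Require Import Defs.
From mathcomp Require Import all_boot all_order all_algebra.
From mathcomp Require Import reals complex.
From mathcomp Require Import ring lra.
Import Order.TTheory GRing.Theory Num.Theory.
Set Implicit Arguments.
Unset Strict Implicit.
Local Open Scope ring_scope.
Local Open Scope complex_scope.

Section Scalar.
Variable R : realType.
Local Notation ReR := (@complex.Re R).
Implicit Types (u v : nat -> R[i]) (s t : R[i]).

Lemma normRe (x : R[i]) : `|x| = (ReR `|x|)%:C.
Proof. by rewrite RRe_real // normr_real. Qed.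

Lemma ge0Re (x : R[i]) : 0 <= x -> x = (ReR x)%:C.
Proof. by move=> hx; rewrite RRe_real // ger0_real. Qed.

Lemma ss_ext u v s : (forall n, u n = v n) -> series_sumC u s -> series_sumC v s.
Proof.
move=> e H eps he; have [N HN] := H eps he; exists N => n hn.
by under eq_bigr do rewrite -e; apply: HN.
Qed.

Lemma ss_uniq u s t : series_sumC u s -> series_sumC u t -> s = t.
Proof.
move=> H1 H2; apply/eqP; apply/negPn/negP => hne.
set r := ReR `|s - t|.
have hr : 0 < r by rewrite -ltcR -normRe normr_gt0 subr_eq0.
have [N1 h1] := H1 (r / 2) ltac:(lra).
have [N2 h2] := H2 (r / 2) ltac:(lra).
set n := maxn N1 N2.
have := h1 n (leq_maxl _ _); have := h2 n (leq_maxr _ _).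
move=> a b.
have : `|s - t| < (r/2)%:C + (r/2)%:C.
  apply: le_lt_trans (ltrD b a).
  have -> : s - t = (\sum_(i < n) u i - t) - (\sum_(i < n) u i - s) by ring.
  rewrite [X in _ <= X]addrC; exact: ler_normB.
rewrite {1}normRe -/r -(rmorphD (real_complex R)) ltcR; lra.
Qed.

Lemma ss_add u v s t : series_sumC u s -> series_sumC v t ->
  series_sumC (fun n => u n + v n) (s + t).
Proof.
move=> H1 H2 eps he.
have [N1 h1] := H1 (eps / 2) ltac:(lra).
have [N2 h2] := H2 (eps / 2) ltac:(lra).
exists (maxn N1 N2) => n hn.
rewrite big_split /=.
have -> : \sum_(i < n) u i + \sum_(i < n) v i - (s + t) =
   (\sum_(i < n) u i - s) + (\sum_(i < n) v i - t) by ring.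
apply: le_lt_trans (ler_normD _ _) _.
have -> : eps = eps / 2 + eps / 2 by field.
rewrite rmorphD; apply: ltrD.
  by apply: h1; apply: leq_trans hn; apply: leq_maxl.
by apply: h2; apply: leq_trans hn; apply: leq_maxr.
Qed.

Lemma ss_scale c u s : series_sumC u s ->
  series_sumC (fun n => c * u n) (c * s).
Proof.
move=> H eps he.
set rc := ReR `|c|.
have hrc : 0 <= rc by rewrite -ler0c -normRe.
have [N h] := H (eps / (rc + 1)) ltac:(apply: divr_gt0; lra).
exists N => n hn.
rewrite -mulr_sumr -mulrBr normrM.
have h1 := h n hn.
apply: (@le_lt_trans _ _ (`|c| * (eps / (rc + 1))%:C)).
  by apply: ler_wpM2l => //; apply: ltW.
rewrite normRe -rmorphM ltcR -/rc.
rewrite mulrA ltr_pdivrMr; last lra.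
nra.
Qed.

Lemma ss_conj u s : series_sumC u s -> series_sumC (fun n => (u n)^*) s^*.
Proof.
move=> H eps he; have [N h] := H eps he; exists N => n hn.
have := h n hn.
by rewrite -(rmorph_sum (@conjc R)) -rmorphB /= -[conjc _]/(Num.conj _) norm_conjC.
Qed.

End Scalar.
Section Form.
Variable R : realType.
Variable V : lmodType R[i].
Variable P : V -> V -> R[i].
Hypothesis Pl : forall (x : V) (a : R[i]) (y z : V), P x (a *: y + z) = a * P x y + P x z.
Hypothesis Ph : forall x y : V, P x y = (P y x)^*.

Lemma P0r x : P x 0 = 0.
Proof. have := Pl x 1 0 0; rewrite scaler0 addr0 mul1r => e.
by apply: (addrI (P x 0)); rewrite -e addr0. Qed.

Lemma PDr x y z : P x (y + z) = P x y + P x z.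
Proof. by rewrite -[y]scale1r Pl mul1r scale1r. Qed.

Lemma PZr x a y : P x (a *: y) = a * P x y.
Proof. by rewrite -[a *: y]addr0 Pl P0r addr0. Qed.

Lemma PNr x y : P x (- y) = - P x y.
Proof. by rewrite -scaleN1r PZr mulN1r. Qed.

Lemma PBr x y z : P x (y - z) = P x y - P x z.
Proof. by rewrite PDr PNr. Qed.

Lemma Psumr x n (u : nat -> V) : P x (\sum_(i < n) u i) = \sum_(i < n) P x (u i).
Proof.
elim: n => [|n IH]; first by rewrite !big_ord0 P0r.
by rewrite !big_ord_recr /= PDr IH.
Qed.

Lemma P0l x : P 0 x = 0.
Proof. by rewrite Ph P0r rmorph0. Qed.

Lemma PDl x y z : P (y + z) x = P y x + P z x.
Proof. by rewrite [LHS]Ph PDr rmorphD /= (Ph y x) (Ph z x). Qed.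

Lemma PZl x a y : P (a *: y) x = a^* * P y x.
Proof. by rewrite [LHS]Ph PZr rmorphM /= (Ph y x). Qed.

Lemma PNl x y : P (- y) x = - P y x.
Proof. by rewrite [LHS]Ph PNr rmorphN /= (Ph y x). Qed.

Lemma PBl x y z : P (y - z) x = P y x - P z x.
Proof. by rewrite PDl PNl. Qed.

Hypothesis Pp : forall x, 0 <= P x x.

Lemma Preal x : (P x x)^* = P x x.
Proof. by apply: conj_Creal; apply: ger0_real. Qed.

Lemma CS y z : 0 < P z z -> `|P y z| ^+ 2 <= P y y * P z z.
Proof.
move=> hc.
set c := P z z.
have cn0 : c != 0 by rewrite gt_eqF.
set t := - (P z y) / c.
have := Pp (t *: z + y).
rewrite PDl !PZl !PDr !PZr.
have Ph' : forall x y, P x y = Num.conj (P y x) := Ph.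
have Pr' : Num.conj c = c := Preal z.
have -> : Num.conj t = - P y z / c.
  by rewrite /t fmorph_div rmorphN /= -Ph' Pr'.
rewrite /t (Ph' z y).
rewrite normCK.
move: (P y z) => b.
have -> : - b / c * (- Num.conj b / c * c + Num.conj b) + (- Num.conj b / c * b + P y y) =
          P y y - (b * Num.conj b) / c by field.
rewrite subr_ge0 ler_pdivrMr //.
Qed.

End Form.
Section Main.
Variable R : realType.
Variable V : lmodType R[i].
Variables (ip : V -> V -> R[i]) (J : V -> V) (k : nat -> V) (S Q : V -> V).
Hypothesis ipl : forall x a y z, ip x (a *: y + z) = a * ip x y + ip x z.
Hypothesis iph : forall x y, ip x y = (ip y x)^*.
Hypothesis Jinv : forall x, J (J x) = x.
Hypothesis Jsa : forall x y, ip (J x) y = ip x (J y).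
Hypothesis hH : hilbert_ip (ipJ ip J).
Hypothesis FO : frame_operator ip J k S.
Hypothesis SQ : cancel S Q.
Hypothesis QS : cancel Q S.

Local Notation h := (ipJ ip J).
Local Notation ReR := (@complex.Re R).

Lemma hl x a y z : h x (a *: y + z) = a * h x y + h x z.
Proof. by case: hH => + _ _ _ _; apply. Qed.
Lemma hh x y : h x y = (h y x)^*.
Proof. by case: hH => _ + _ _ _; apply. Qed.
Lemma hpos x : 0 <= h x x.
Proof. by case: hH => _ _ + _ _; apply. Qed.
Lemma hdef x : h x x = 0 -> x = 0.
Proof. by case: hH => _ _ _ + _; apply. Qed.

Lemma hJl a x : h (J a) x = ip a x.
Proof. by rewrite /ipJ Jsa Jinv. Qed.
Lemma hJr a x : h a (J x) = ip a x.
Proof. by rewrite /ipJ Jinv. Qed.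
Lemma hJJ x : h (J x) (J x) = h x x.
Proof. by rewrite hJl. Qed.
Lemma ipE w v : ip w v = h (J w) v.
Proof. by rewrite hJl. Qed.

Lemma h_ext a b : (forall w, h w a = h w b) -> a = b.
Proof.
move=> H; apply/eqP; rewrite -subr_eq0; apply/eqP; apply: hdef.
by rewrite (PBr hl) H subrr.
Qed.

Lemma Jlin a y z : J (a *: y + z) = a *: J y + J z.
Proof. by apply: h_ext => w; rewrite hJr ipl hl !hJr. Qed.

Lemma nJ2 x : normJ ip J x ^+ 2 = h x x.
Proof. by rewrite /normJ /hnorm sqrtCK. Qed.

Lemma hnorm_lt v e : 0 < e -> (hnorm h v < e%:C) = (h v v < (e ^+ 2)%:C).
Proof.
move=> he; rewrite /hnorm -(ltr_pXn2r (n := 2)) //.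
- by rewrite sqrtCK rmorphXn.
- by rewrite nnegrE sqrtC_ge0 hpos.
- by rewrite nnegrE ler0c ltW.
Qed.

Lemma sv_ext (u v : nat -> V) y : (forall n, u n = v n) ->
  series_sumV h u y -> series_sumV h v y.
Proof.
move=> e H eps he; have [N HN] := H eps he; exists N => n hn.
by under eq_bigr do rewrite -e; apply: HN.
Qed.

Lemma cont w (u : nat -> V) y : series_sumV h u y ->
  series_sumC (fun n => h w (u n)) (h w y).
Proof.
move=> H eps he.
have [hw|hw] := eqVneq (h w w) 0.
  have w0 := hdef hw; exists 0%N => n _.
  rewrite w0 (P0l hl hh).
  under eq_bigr do rewrite (P0l hl hh).
  by rewrite big1 // subrr normr0 ltcR.
have hc : 0 < h w w by rewrite lt_def hw hpos.
set rc := ReR (h w w).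
have ec : h w w = rc%:C by apply: ge0Re; exact: hpos.
have hrc : 0 < rc by rewrite -ltcR -ec.
set e2 := eps ^+ 2 / (rc + 1).
have he2 : 0 < e2 by apply: divr_gt0; [apply: exprn_gt0|lra].
have [N HN] := H (Num.sqrt e2) ltac:(by rewrite sqrtr_gt0).
exists N => n hn.
have := HN n hn; rewrite hnorm_lt ?sqrtr_gt0 // sqr_sqrtr ?ltW // => hd.
rewrite -(Psumr hl) -(PBr hl).
move: (\sum_(i < n) u i - y) hd => d hd.
rewrite -(ltr_pXn2r (n := 2)) //; last 2 first.
- by rewrite nnegrE normr_ge0.
- by rewrite nnegrE ler0c ltW.
rewrite hh norm_conjC.
apply: le_lt_trans (CS hl hh hpos d hc) _.
apply: lt_le_trans (_ : (e2%:C * h w w) <= _).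
  by rewrite ltr_pM2r.
rewrite ec -rmorphM -rmorphXn lecR /e2.
rewrite mulrAC ler_pdivrMr; last lra.
have : 0 < eps ^+ 2 by apply: exprn_gt0.
nra.
Qed.

Section Op.
Variable L : V -> V.
Hypothesis Llin : forall a y z, L (a *: y + z) = a *: L y + L z.
Lemma L0 : L 0 = 0.
Proof. have := Llin 1 0 0; rewrite scaler0 addr0 scale1r => e.
by apply: (addrI (L 0)); rewrite -e addr0. Qed.
Lemma LD y z : L (y + z) = L y + L z.
Proof. by have := Llin 1 y z; rewrite !scale1r. Qed.
Lemma LN y : L (- y) = - L y.
Proof. by have := Llin (-1) y 0; rewrite addr0 L0 addr0 !scaleN1r. Qed.
Lemma LB y z : L (y - z) = L y - L z.
Proof. by rewrite LD LN. Qed.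
Lemma Lsum n (u : nat -> V) : L (\sum_(i < n) u i) = \sum_(i < n) L (u i).
Proof.
elim: n => [|n IH]; first by rewrite !big_ord0 L0.
by rewrite !big_ord_recr /= LD IH.
Qed.

Lemma opcont (c : R) (u : nat -> V) y : 0 < c ->
  (forall d, h (L d) (L d) <= (c ^+ 2)%:C * h d d) ->
  series_sumV h u y -> series_sumV h (fun n => L (u n)) (L y).
Proof.
move=> hc Lb H eps he.
have [N HN] := H (eps / c) ltac:(by apply: divr_gt0).
exists N => n hn.
have := HN n hn; rewrite !hnorm_lt //; last exact: (divr_gt0 he hc).
rewrite -Lsum -LB.
move: (\sum_(i < n) u i - y) => d hd.
apply: le_lt_trans (Lb d) _.
apply: lt_le_trans (_ : (c ^+ 2)%:C * ((eps / c) ^+ 2)%:C <= _).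
  by rewrite ltr_pM2l // ltcR exprn_gt0.
rewrite -rmorphM lecR expr_div_n mulrCA mulfV ?mulr1 //.
by rewrite expf_neq0 // gt_eqF.
Qed.
End Op.

Lemma L1 w x : series_sumC (fun n => ip (k n) x * h w (k n)) (h w (S x)).
Proof.
apply: ss_ext (cont w (FO x)) => n.
by rewrite (PZr hl).
Qed.

Lemma L1' w x : series_sumC (fun n => ip (k n) x * ip w (k n)) (ip w (S x)).
Proof.
rewrite ipE; apply: ss_ext (L1 (J w) x) => n.
by rewrite hJl.
Qed.

Lemma SA u v : ip (S u) v = ip u (S v).
Proof.
have A := ss_conj (L1' v u).
have B := L1' u v.
rewrite iph.
apply: ss_uniq A _.
apply: ss_ext B => n.
by rewrite rmorphM /= -!iph mulrC.
Qed.

Lemma SL a u v : S (a *: u + v) = a *: S u + S v.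
Proof.
apply: h_ext => w.
apply: ss_uniq (L1 w (a *: u + v)) _.
rewrite hl.
apply: ss_ext (ss_add (ss_scale a (L1 w u)) (L1 w v)) => n.
by rewrite ipl mulrDl mulrA.
Qed.

Lemma QL a u v : Q (a *: u + v) = a *: Q u + Q v.
Proof. by rewrite -{1}[u]QS -{1}[v]QS -SL SQ. Qed.

Lemma QSA u v : ip (Q u) v = ip u (Q v).
Proof. by rewrite -{1}[v]QS -SA QS. Qed.

Lemma PS y s : series_sumC (fun n => `|ip (k n) y| ^+ 2) s -> s = ip (S y) y.
Proof.
move=> H; rewrite SA; apply: ss_uniq H _.
apply: ss_ext (L1' y y) => n.
by rewrite normCK [Num.conj _](_ : _ = ip y (k n)) // iph.
Qed.

Section Bounds.
Variables A B : R.
Hypothesis hA : 0 < A.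
Hypothesis hAB : A <= B.
Hypothesis FB : frame_bounds ip J ip k A B.

Lemma ge0_cases (r : R) : 0 <= r -> r = 0 \/ 0 < r.
Proof. by rewrite le_eqVlt => /orP [/eqP ->|]; [left|right]. Qed.

Lemma Pb x : A%:C * h x x <= ip (S x) x /\ ip (S x) x <= B%:C * h x x.
Proof.
have [s [Hs [h1 h2]]] := FB x.
by rewrite -(PS Hs) -nJ2.
Qed.

Lemma Pp x : 0 <= ip (S x) x.
Proof.
case: (Pb x) => h1 _; apply: le_trans h1.
by apply: mulr_ge0; [rewrite ler0c ltW|apply: hpos].
Qed.

Let Pf := fun u v => ip (S u) v.
Let Pfl u a y z : Pf u (a *: y + z) = a * Pf u y + Pf u z.
Proof. exact: ipl. Qed.
Let Pfh u v : Pf u v = (Pf v u)^*.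
Proof. by rewrite /Pf iph SA. Qed.

Lemma F3 x : [/\ B^-1%:C * h x x <= ip x (Q x), ip x (Q x) <= A^-1%:C * h x x &
   h (Q x) (Q x) <= ((A^-1) ^+ 2)%:C * h x x].
Proof.
set y := Q x.
have Sy : S y = x := QS x.
have es : ip x y = ip (S y) y by rewrite Sy.
have hs : 0 <= ip x y by rewrite es Pp.
set c := h x x.
set rc := ReR c. set rs := ReR (ip x y). set ryy := ReR (h y y).
have ec : c = rc%:C by apply: ge0Re; apply: hpos.
have es' : ip x y = rs%:C by apply: ge0Re.
have eyy : h y y = ryy%:C by apply: ge0Re; apply: hpos.
have hrc : 0 <= rc by rewrite -ler0c -ec hpos.
have hyy : 0 <= ryy by rewrite -ler0c -eyy hpos.
have [Fa1 Fa2] : A * ryy <= rs /\ rs <= B * ryy.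
  by case: (Pb y); rewrite -es eyy es' -!rmorphM !lecR.
have F0 : rc = 0 -> rs = 0.
  move=> r0; have : c = 0 by rewrite ec r0.
  move/hdef => x0; apply: complexI; rewrite -es' x0 (P0l ipl iph) //.
have Fb : 0 < rc -> rs ^+ 2 <= ryy * rc.
  move=> rcp; have cp : 0 < c by rewrite ec ltcR.
  have := CS hl hh hpos (J y) cp.
  rewrite hJJ hJl iph norm_conjC ger0_norm // es' eyy -/c ec.
  by rewrite -rmorphXn -rmorphM lecR.
set rp := ReR (ip (S (J x)) (J x)).
have ep : ip (S (J x)) (J x) = rp%:C by apply: ge0Re; apply: Pp.
have [Fc1 Fc2] : A * rc <= rp /\ rp <= B * rc.
  by case: (Pb (J x)); rewrite hJJ -/c ec ep -!rmorphM !lecR.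
have Fc : 0 < rc -> rc ^+ 2 <= rs * rp.
  move=> rcp.
  have pp : 0 < Pf (J x) (J x).
  rewrite /Pf ep (_ : 0 = 0%:C) // ltcR. exact: lt_le_trans (mulr_gt0 hA rcp) Fc1.
  have := CS Pfl Pfh (fun u => Pp u) y pp.
  rewrite /Pf Sy -/(h x x) -/c ger0_norm ?hpos // es' ep ec.
  by rewrite -rmorphXn -rmorphM lecR.
have hB : 0 < B := lt_le_trans hA hAB.
have hs0 : 0 <= rs by apply: le_trans Fa1; apply: mulr_ge0 => //; apply: ltW.
have Up : rs <= rc / A.
  rewrite ler_pdivlMr //.
  have [r0|rp0] := ge0_cases hrc.
    by rewrite (F0 r0) r0 mul0r.
  have := Fb rp0.
  have [s0|sp] := ge0_cases hs0.
    by move=> _; rewrite s0 mul0r.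
  move=> h1.
  have : A * rs ^+ 2 <= rs * rc.
    apply: le_trans (ler_wpM2l (ltW hA) h1) _.
    by rewrite mulrA; apply: ler_wpM2r => //; apply: ltW.
  rewrite expr2 mulrA => h2.
  by rewrite -(ler_pM2r sp) [rc * _]mulrC [rs * A]mulrC.
split.
- rewrite -/c ec es' -rmorphM lecR mulrC ler_pdivrMr //.
  have [r0|rp0] := ge0_cases hrc.
    by rewrite r0; nra.
  have := Fc rp0.
  have h1 : rs * rp <= rs * (B * rc) by apply: ler_wpM2l => //.
  move=> h2.
  have h3 : rc * rc <= (rs * B) * rc by rewrite -expr2 -mulrA; apply: le_trans h2 h1.
  by rewrite -(ler_pM2r rp0).
- by rewrite -/c ec es' -rmorphM lecR mulrC.
- rewrite eyy -/c ec -rmorphM lecR.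
  rewrite expr2 -mulrA mulrC ler_pdivlMr //.
  have : A * ryy <= rc / A by apply: le_trans Up.
  rewrite mulrC -ler_pdivlMr //.
  by rewrite ler_pdivlMr // [A^-1 * rc]mulrC.
Qed.

Lemma D0 : frame_bounds ip J ip (Q \o k) B^-1 A^-1.
Proof.
move=> x; have [s [Hs _]] := FB (Q x).
have es : s = ip x (Q x) by rewrite (PS Hs) QS.
exists s; split.
  by apply: ss_ext Hs => n /=; rewrite QSA.
by rewrite nJ2 es; case: (F3 x).
Qed.

Lemma Qb d : h (Q d) (Q d) <= ((A^-1) ^+ 2)%:C * h d d.
Proof. by case: (F3 d). Qed.

Lemma recon_op (L : V -> V) (c : R) (coef : nat -> R[i]) z x :
  (forall a y w, L (a *: y + w) = a *: L y + L w) -> 0 < c ->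
  (forall d, h (L d) (L d) <= (c ^+ 2)%:C * h d d) ->
  (forall n, coef n = ip (k n) z) -> L (S z) = x ->
  series_sumV h (fun n => coef n *: L (k n)) x.
Proof.
move=> Ll hc Lb hco Lx.
have := opcont Ll hc Lb (FO z); rewrite Lx.
apply: sv_ext => n.
by rewrite -[_ *: k n]addr0 Ll (L0 Ll) addr0 hco.
Qed.

Let idlin (a : R[i]) (y w : V) : @id V (a *: y + w) = a *: @id V y + @id V w. Proof. by []. Qed.
Let idb (d : V) : h (@id V d) (@id V d) <= (1 ^+ 2)%:C * h d d.
Proof. by rewrite expr1n mul1r. Qed.
Let Jb d : h (J d) (J d) <= (1 ^+ 2)%:C * h d d.
Proof. by rewrite hJJ expr1n mul1r. Qed.
Let JQlin a y w : (J \o Q) (a *: y + w) = a *: (J \o Q) y + (J \o Q) w.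
Proof. by rewrite /= QL Jlin. Qed.
Let JQb d : h ((J \o Q) d) ((J \o Q) d) <= ((A^-1) ^+ 2)%:C * h d d.
Proof. by rewrite /= hJJ Qb. Qed.
Let hAi : 0 < A^-1. Proof. by rewrite invr_gt0. Qed.

Lemma R1 x : series_sumV h (fun n => ip (Q (k n)) x *: k n) x.
Proof.
apply: (@recon_op (@id V) 1 _ (Q x)).
- exact: idlin.
- exact: ltr01.
- exact: idb.
- by move=> n; rewrite QSA.
- by rewrite /= QS.
Qed.

Lemma R2 x : series_sumV h (fun n => ip (Q (k n)) (J x) *: J (k n)) x.
Proof.
apply: (@recon_op J 1 _ (Q (J x))).
- exact: Jlin.
- exact: ltr01.
- exact: Jb.
- by move=> n; rewrite QSA.
- by rewrite QS Jinv.
Qed.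

Lemma R3b x : series_sumV h (fun n => h (k n) x *: J (Q (k n))) x.
Proof.
apply: (@recon_op (J \o Q) A^-1 _ (J x)).
- exact: JQlin.
- exact: hAi.
- exact: JQb.
- by [].
- by rewrite /= SQ Jinv.
Qed.

Lemma R4b x : series_sumV h (fun n => h (J (k n)) x *: Q (k n)) x.
Proof.
apply: (@recon_op Q A^-1 _ x).
- exact: QL.
- exact: hAi.
- by move=> d; move: (JQb d); rewrite /= hJJ.
- by move=> n; rewrite hJl.
- by rewrite SQ.
Qed.

End Bounds.

Lemma FBT (f f' : V -> V -> R[i]) (g g' : nat -> V) (phi : V -> V) A B :
  (forall x, h (phi x) (phi x) = h x x) -> (forall n x, f' (g' n) x = f (g n) (phi x)) ->
  frame_bounds ip J f g A B -> frame_bounds ip J f' g' A B.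
Proof.
move=> hp hf H x; have [s [Hs [h1 h2]]] := H (phi x).
exists s; split; first by apply: ss_ext Hs => n; rewrite hf.
by rewrite nJ2 -hp -nJ2.
Qed.

Lemma isf_of f g A B : 0 < A -> A <= B -> frame_bounds ip J f g A B -> is_frame ip J f g.
Proof. by move=> hA hAB H; exists A, B. Qed.

Lemma bounds4 A B : 0 < A -> A <= B -> frame_bounds ip J ip k A B ->
  [/\ frame_bounds ip J ip (Q \o k) B^-1 A^-1,
      frame_bounds ip J ip (J \o Q \o k) B^-1 A^-1,
      frame_bounds ip J h (J \o Q \o k) B^-1 A^-1 &
      frame_bounds ip J h (Q \o k) B^-1 A^-1].
Proof.
move=> hA hAB FB.
have D1 := D0 hA hAB FB.
split => //.
- apply: (FBT (f := ip) (g := Q \o k) (phi := J)) D1 => //; first exact: hJJ.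
  by move=> n x /=; rewrite Jsa.
- apply: (FBT (f := ip) (g := Q \o k) (phi := id)) D1 => //.
  by move=> n x /=; rewrite hJl.
- apply: (FBT (f := ip) (g := Q \o k) (phi := J)) D1 => //; exact: hJJ.
Qed.

Lemma kbounds A B : frame_bounds ip J ip k A B ->
  [/\ frame_bounds ip J ip (J \o k) A B,
      frame_bounds ip J h k A B &
      frame_bounds ip J h (J \o k) A B].
Proof.
move=> FB; split.
- apply: (FBT (f := ip) (g := k) (phi := J)) FB => //; first exact: hJJ.
  by move=> n x /=; rewrite Jsa.
- apply: (FBT (f := ip) (g := k) (phi := J)) FB => //; exact: hJJ.
- apply: (FBT (f := ip) (g := k) (phi := id)) FB => //.
  by move=> n x /=; rewrite hJl.
Qed.

Lemma main_sec : is_frame ip J ip k ->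
  [/\ krein_dual ip J (Q \o k) k,
      krein_dual ip J (J \o Q \o k) (J \o k),
      hilbert_dual ip J (J \o Q \o k) k,
      hilbert_dual ip J (Q \o k) (J \o k) &
      forall A B : R, 0 < A -> A <= B -> frame_bounds ip J ip k A B ->
        [/\ frame_bounds ip J ip (Q \o k) B^-1 A^-1,
            frame_bounds ip J ip (J \o Q \o k) B^-1 A^-1,
            frame_bounds ip J h (J \o Q \o k) B^-1 A^-1 &
            frame_bounds ip J h (Q \o k) B^-1 A^-1]].
Proof.
move=> hF; have [A0 [B0 [hA0 [hAB0 FB0]]]] := hF.
have hB0 : 0 < B0 := lt_le_trans hA0 hAB0.
have hBi : 0 < B0^-1 by rewrite invr_gt0.
have hBA : B0^-1 <= A0^-1 by rewrite lef_pV2 ?posrE.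
have [D1 D2 D3 D4] := bounds4 hA0 hAB0 FB0.
have [K2 K3 K4] := kbounds FB0.
have isf := fun f g (H : frame_bounds ip J f g B0^-1 A0^-1) => isf_of hBi hBA H.
have isk := fun f g (H : frame_bounds ip J f g A0 B0) => isf_of hA0 hAB0 H.
split.
- split; [exact: hF | exact: isf D1 | ].
  move=> x; exact: R1.
- split; [exact: isk K2 | exact: isf D2 | ].
  move=> x; apply: sv_ext (R2 x) => n /=.
  by rewrite Jsa.
- split; [exact: isk K3 | exact: isf D3 | | ].
  + move=> x; apply: sv_ext (R1 x) => n /=.
    by rewrite hJl.
  + move=> x; exact: (R3b hA0 hAB0 FB0 x).
- split; [exact: isk K4 | exact: isf D4 | | ].
  + move=> x; exact: R2.
  + move=> x; exact: (R4b hA0 hAB0 FB0 x).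
- move=> A B hA hAB FB; exact: bounds4.
Qed.

End Main.

Lemma krein_facts (R : realType) (V : lmodType R[i]) (ip : V -> V -> R[i]) (J : V -> V) :
  krein_space ip J ->
  [/\ (forall x a y z, ip x (a *: y + z) = a * ip x y + ip x z),
      (forall x y, ip x y = (ip y x)^*),
      (forall x, J (J x) = x),
      (forall x y, ip (J x) y = ip x (J y)) &
      hilbert_ip (ipJ ip J)].
Proof.
case=> ipl iph [Kp [Km [[sKp sKm] [_ dec] orth _ JK]]] hH.
have neg : forall km, Km km -> Km (- km).
  move=> km hm; have := sKm.2 (-1) km 0 hm sKm.1.
  by rewrite scaleN1r addr0.
have Jinv : forall x, J (J x) = x.
  move=> x; have [kp [km [hp [hm ->]]]] := dec x.
  have hm' := neg _ hm. rewrite (JK _ _ hp hm) -[kp - km]/(kp + - km) (JK _ _ hp hm'). by congr (_ + _); apply: opprK.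
split; [exact: ipl|exact: iph|exact: Jinv| |exact: hH]. move=> x y.
have [kp [km [hp [hm ->]]]] := dec x.
have [lp [lm [hlp [hlm ->]]]] := dec y.
rewrite !JK //.
have o1 : ip kp lm = 0 by apply: orth.
have o2 : ip km lp = 0 by rewrite iph orth // conjc0.
change (ip (kp + - km) (lp + lm) = ip (kp + km) (lp + - lm)).
rewrite !(PDl ipl iph) !(PDr ipl) !(PNl ipl iph) !(PNr ipl) o1 o2.
ring.
Qed.

Unset Implicit Arguments.

Theorem proposition3p8 (R : realType) (V : lmodType R[i])
    (ip : V -> V -> R[i]) (J : V -> V) (k : nat -> V) (S Sinv : V -> V) :
  krein_space ip J ->
  is_frame ip J ip k ->
  frame_operator ip J k S ->
  cancel S Sinv -> cancel Sinv S ->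
  [/\ krein_dual ip J (Sinv \o k) k,
      krein_dual ip J (J \o Sinv \o k) (J \o k),
      hilbert_dual ip J (J \o Sinv \o k) k,
      hilbert_dual ip J (Sinv \o k) (J \o k) &
      forall A B : R, 0 < A -> A <= B -> frame_bounds ip J ip k A B ->
        [/\ frame_bounds ip J ip (Sinv \o k) B^-1 A^-1,
            frame_bounds ip J ip (J \o Sinv \o k) B^-1 A^-1,
            frame_bounds ip J (ipJ ip J) (J \o Sinv \o k) B^-1 A^-1 &
            frame_bounds ip J (ipJ ip J) (Sinv \o k) B^-1 A^-1]].
Proof.
move=> hK hF hFO SQ QS.
have [ipl iph Jinv Jsa hH] := krein_facts hK.
exact: main_sec.
Qed.
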